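(* Let $G$ be a permutation group on a finite set $\Omega$, $|\Omega|=n$, and let $1\le k\le n$. (a) If $G$ is $k$-transitive, then $G$ has the ordered $k$-ut property. (b) If $k\ge 2$ and $G$ has ordered $k$-ut, then $G$ has ordered $(k-1)$-ut. (c) If $k\ge 2$ and $G$ has the $k$-ut property and is generously $(k-1)$-transitive, then $G$ has ordered $k$-ut. (d) If $k\ge2$ and $G$ has ordered $k$-ut, then $G$ is $(k-1)$-transitive. (e) If $k\ge2$ and $G$ has ordered $k$-ut, then $G$ is $(k-1)$-primitive. (f) If $k\ge 2$ and $G$ has ordered $k$-ut, then the stabiliser in $G$ of a point $\alpha$ has ordered $(k-1)$-ut on $\Omega\setminus\{\alpha\}$.
   Context: $G$ has the $k$-ut (universal transversal) property if for every $k$-subset $A\subseteq\Omega$ and every partition $P$ of $\Omega$ into $k$ parts there is $g\in G$ with $Ag$ a transversal of $P$ (meets every part in exactly one point). $G$ has the ordered $k$-ut property if for every $k$-tuple $(a_1,\dots,a_k)$ of distinct points and every ordered partition $(P_1,\dots,P_k)$ of $\Omega$ into $k$ nonempty parts there is $g\in G$ with $a_ig\in P_i$ for all $i$. $G$ is $m$-primitive if it is $m$-transitive and the pointwise stabiliser of any $m-1$ points is primitive on the remaining points (so $1$-primitive means primitive). $G$ is generously $m$-transitive if for every $(m+1)$-subset $M\subseteq\Omega$ the group induced on $M$ by the setwise stabiliser of $M$ is the full symmetric group on $M$. *)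

(* Defs.v *)
From mathcomp Require Import all_boot all_fingroup all_solvable.
Set Implicit Arguments. Unset Strict Implicit. Unset Printing Implicit Defensive.
Local Open Scope group_scope.

Definition kut (T : finType) (G : {set {perm T}}) (D : {set T}) (k : nat) :=
  forall A : {set T}, A \subset D -> #|A| = k ->
  forall P : {set {set T}}, partition P D -> #|P| = k ->
  exists2 g, g \in G & forall B, B \in P -> #|[set g x | x in A] :&: B| = 1%N.

Definition ordered_partition (T : finType) (k : nat) (P : 'I_k -> {set T})
  (D : {set T}) :=
  [/\ forall i, P i != set0,
      forall i j, i != j -> [disjoint P i & P j] &
      \bigcup_(i < k) P i = D].

Definition ordered_kut (T : finType) (G : {set {perm T}}) (D : {set T}) (k : nat) :=
  forall a : 'I_k -> T, injective a -> (forall i, a i \in D) ->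
  forall P : 'I_k -> {set T}, ordered_partition P D ->
  exists2 g, g \in G & forall i, g (a i) \in P i.

Definition m_primitive (T : finType) (G : {group {perm T}}) (D : {set T}) (m : nat) :=
  [transitive^m G, on D | 'P] /\
  forall S : {set T}, S \subset D -> #|S| = m.-1 ->
    [primitive 'C_G(S | 'P), on D :\: S | 'P].

Definition generously_transitive (T : finType) (G : {set {perm T}}) (D : {set T}) (m : nat) :=
  forall M : {set T}, M \subset D -> #|M| = m.+1 ->
  forall s : {perm T}, perm_on M s ->
  exists2 g, g \in G & [set g x | x in M] = M /\ {in M, forall x, g x = s x}.

(* Main.v *)
Require Import Defs.
From mathcomp Require Import all_boot all_fingroup all_solvable.
Set Implicit Arguments. Unset Strict Implicit. Unset Printing Implicit Defensive.
Local Open Scope group_scope.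

Section Glue.
Variables (T : finType) (G : {set {perm T}}) (D : {set T}) (j m : nat).
Variables (s : 'I_j -> T) (Q : 'I_j -> {set T}) (a : 'I_m -> T) (P : 'I_m -> {set T}).

Lemma glue_kut :
  ordered_kut G D (j + m) ->
  injective s -> injective a -> (forall u v, s u != a v) ->
  (forall u, s u \in D) -> (forall v, a v \in D) ->
  (forall u, Q u != set0) -> (forall v, P v != set0) ->
  (forall u u', u != u' -> [disjoint Q u & Q u']) ->
  (forall v v', v != v' -> [disjoint P v & P v']) ->
  (forall u v, [disjoint Q u & P v]) ->
  (\bigcup_(u < j) Q u) :|: (\bigcup_(v < m) P v) = D ->
  exists2 g, g \in G & (forall u, g (s u) \in Q u) /\ (forall v, g (a v) \in P v).
Proof.
move=> hk sinj ainj sa sD aD Qn Pn Qd Pd QPd U.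
pose f (x : 'I_j + 'I_m) := match x with inl u => s u | inr v => a v end.
pose F (x : 'I_j + 'I_m) := match x with inl u => Q u | inr v => P v end.
have finj : injective f.
  case=> [u|v] [u'|v'] /= e.
  - by rewrite (sinj _ _ e).
  - by move: (sa u v'); rewrite e eqxx.
  - by move: (sa u' v); rewrite e eqxx.
  - by rewrite (ainj _ _ e).
have finj' : injective (f \o split) by exact: inj_comp finj (can_inj splitK).
have fD : forall i, (f \o split) i \in D by move=> i /=; case: (split i).
have [|g gG hg] := hk _ finj' fD (F \o split).
- split.
  + by move=> i /=; case: (split i).
  + move=> i i' /= ne.
    have : split i != split i' by apply: contra ne => /eqP/(can_inj splitK) ->.
    case: (split i) => [u|v]; case: (split i') => [u'|v'] //= ne'.
    * by apply: Qd; apply: contra ne' => /eqP ->.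
    * by rewrite disjoint_sym.
    * by apply: Pd; apply: contra ne' => /eqP ->.
  + by rewrite (big_split_ord _ predT) /= -U; congr (_ :|: _);
      apply: eq_bigr => i _; rewrite /= ?(unsplitK (inl _ i)) ?(unsplitK (inr _ i)).
exists g => //; split.
  by move=> u; have := hg (lshift m u); rewrite /= (unsplitK (inl _ u)).
by move=> v; have := hg (rshift j v); rewrite /= (unsplitK (inr _ v)).
Qed.
End Glue.

Lemma stab_kut (T : finType) (G : {set {perm T}}) (D S : {set T}) m :
  ordered_kut G D (#|S| + m) -> S \subset D -> ordered_kut 'C_G(S | 'P) (D :\: S) m.
Proof.
move=> hk sSD a ainj aD P [Pn Pd PU].
pose s := (enum_val : 'I_#|S| -> T).
have sS u : s u \in S by apply: enum_valP.
have PDS v : P v \subset D :\: S by rewrite -PU; exact: (bigcup_sup v).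
have [|||||||||||g gG [hs ha]] := @glue_kut T G D #|S| m s (fun u => [set s u]) a P hk.
- exact: enum_val_inj.
- exact: ainj.
- move=> u v; apply: contraTneq (aD v) => <-; by rewrite inE sS.
- by move=> u; apply: (subsetP sSD).
- by move=> v; move: (aD v); rewrite inE => /andP[].
- by move=> u; apply/set0Pn; exists (s u); rewrite set11.
- exact: Pn.
- by move=> u u' ne /=; rewrite disjoints1 in_set1 (inj_eq enum_val_inj).
- exact: Pd.
- move=> u v /=; rewrite disjoints1; apply: contraTN (sS u) => /(subsetP (PDS v)).
  by rewrite inE => /andP[].
- rewrite PU; apply/setP => x; rewrite !inE; apply/idP/idP.
    case/orP => [/bigcupP[u _] | /andP[_ //]]; rewrite inE => /eqP ->.
    exact: (subsetP sSD).
  move=> xD; case: (boolP (x \in S)) => xS; last by apply/orP; right; apply/andP.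
  apply/orP; left; apply/bigcupP; exists (enum_rank_in xS x) => //.
  by rewrite inE /s enum_rankK_in.
exists g => //; rewrite inE gG /=; apply/astabP => x xS /=.
by have := hs (enum_rank_in xS x); rewrite /s enum_rankK_in // in_set1 => /eqP.
Qed.

Lemma glue11 (T : finType) (H : {set {perm T}}) (D : {set T}) x y (A B : {set T}) :
  ordered_kut H D 2 -> x \in D -> y \in D -> x != y -> A != set0 -> B != set0 ->
  [disjoint A & B] -> A :|: B = D ->
  exists2 g, g \in H & g x \in A /\ g y \in B.
Proof.
move=> hk xD yD xy An Bn AB U.
have [|||||||||||g gH [h1 h2]] := @glue_kut T H D 1 1 (fun _ => x) (fun _ => A)
   (fun _ => y) (fun _ => B) hk.
- by move=> u u' _; rewrite !ord1.
- by move=> u u' _; rewrite !ord1.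
- by move=> _ _.
- by [].
- by [].
- by [].
- by [].
- by move=> u u'; rewrite !ord1 eqxx.
- by move=> u u'; rewrite !ord1 eqxx.
- by [].
- by rewrite !big_ord1.
by exists g => //; split; [apply: (h1 ord0) | apply: (h2 ord0)].
Qed.

Lemma kut2_trans (T : finType) (H : {set {perm T}}) (D : {set T}) :
  1 < #|D| -> ordered_kut H D 2 ->
  forall x y, x \in D -> y \in D -> exists2 g, g \in H & g x = y.
Proof.
move=> D2 hk x y xD yD.
have [z zD zx] : exists2 z, z \in D & x != z.
  case/card_gt1P: D2 => u [v [uD vD uv]].
  case: (eqVneq x u) => [e|xu]; first by exists v; rewrite // e.
  by exists u.
have [||||g gH [h1 _]] := glue11 hk xD zD zx (A := [set y]) (B := D :\ y).
- by apply/set0Pn; exists y; rewrite set11.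
- by rewrite -card_gt0 (cardsD1 y D) yD in D2 *.
- by rewrite disjoints1 !inE eqxx.
- by rewrite setD1K.
by exists g => //; apply/eqP; rewrite -in_set1.
Qed.

Lemma kut2_prim (T : finType) (H : {set {perm T}}) (D : {set T}) :
  (forall g x, g \in H -> x \in D -> g x \in D) ->
  1 < #|D| -> ordered_kut H D 2 -> [primitive H, on D | 'P].
Proof.
move=> Hacts D2 hk.
have tr := kut2_trans D2 hk.
apply/andP; split.
  have [x0 x0D] : exists x0, x0 \in D by case/card_gt1P: D2 => u [v [uD _ _]]; exists u.
  apply/imsetP; exists x0 => //; apply/setP => y; apply/idP/idP.
    move=> yD; have [g gH <-] := tr x0 y x0D yD; by apply/imsetP; exists g.
  by case/imsetP => g gH ->; apply: Hacts.
apply/existsP => -[Q /and3P[partQ actQ /andP[Q1 QD]]].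
case/and3P: (partQ) => /eqP covQ tQ nQ0.
have [B0 QB0 B0gt1] : exists2 B0, B0 \in Q & 1 < #|B0|.
  apply/exists_inP; apply: contraLR QD; rewrite -leqNgt => /exists_inPn h.
  rewrite (card_partition partQ) -sum1_card; apply: leq_sum => B QB.
  by rewrite leqNgt h.
have B0D : B0 \subset D by rewrite -covQ; apply: bigcup_sup.
case/card_gt1P: B0gt1 => x [y [xB yB xy]].
have [C QC CB0] : exists2 C, C \in Q & C != B0.
  case/card_gt1P: Q1 => B1 [B2 [QB1 QB2 B12]].
  case: (eqVneq B1 B0) => [e|ne]; last by exists B1.
  by exists B2 => //; rewrite -e eq_sym.
have [c cC] : exists c, c \in C.
  by apply/set0Pn; apply: contraNneq nQ0 => <-.
have cD : c \in D by rewrite -covQ; apply/bigcupP; exists C.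
have cB0 : c \notin B0.
  have := trivIsetP tQ C B0 QC QB0 CB0; rewrite disjoint_sym => /disjointFl.
  by move/(_ c cC) ->.
have [||||g gH [h1 h2]] := glue11 hk (subsetP B0D x xB) (subsetP B0D y yB) xy
   (A := B0) (B := D :\: B0).
- by apply/set0Pn; exists x.
- by apply/set0Pn; exists c; rewrite inE cB0.
- by rewrite disjoints_subset; apply/subsetP => z zB; rewrite !inE zB.
- by rewrite -{2}(setID D B0) (setIidPr B0D).
have QB' : 'P^* B0 g \in Q by rewrite (actsP actQ g gH) //.
have e : 'P^* B0 g = B0.
  apply: contraTeq isT => ne.
  move: (trivIsetP tQ _ _ QB' QB0 ne) => /disjointFl/(_ h1).
  by rewrite (mem_setact 'P g xB).
have : g y \in 'P^* B0 g by apply: (mem_setact 'P g yB).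
by rewrite e; move: h2; rewrite inE => /andP[/negP].
Qed.

Lemma card_bigcup_le (T : finType) m (F : 'I_m -> {set T}) :
  #|\bigcup_(i < m) F i| <= \sum_(i < m) #|F i|.
Proof.
apply: (big_ind2 (fun (A : {set T}) n => #|A| <= n)).
- by rewrite cards0.
- move=> A x B y hA hB; rewrite cardsU; apply: leq_trans (leq_subr _ _) _.
  exact: leq_add.
- by [].
Qed.

Lemma pick_in (T : finType) (A : {set T}) (x0 : T) :
  A != set0 -> odflt x0 [pick x in A] \in A.
Proof.
case: pickP => [x //|h]; case/set0Pn => y; by rewrite (h y).
Qed.

Lemma trans_kut (T : finType) (G : {group {perm T}}) k :
  [transitive^k G, on [set: T] | 'P] -> ordered_kut G [set: T] k.
Proof.
move=> tr a ainj aD P [Pn Pd PU].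
pose b i := odflt (a i) [pick x in P i].
have hb i : b i \in P i by apply: pick_in.
have binj : injective b.
  move=> i j e; case: (eqVneq i j) => // ne.
  by move: (Pd i j ne) => /disjointFl/(_ (hb j)); rewrite -e hb.
pose ta := [tuple a i | i < k]; pose tb := [tuple b i | i < k].
have ta_in : ta \in k.-dtuple([set: T]).
  apply/dtuple_onP; split=> [i j|i]; last by rewrite inE.
  by rewrite /ta !tnth_mktuple; apply: ainj.
have tb_in : tb \in k.-dtuple([set: T]).
  apply/dtuple_onP; split=> [i j|i]; last by rewrite inE.
  by rewrite /tb !tnth_mktuple; apply: binj.
have [g gG e] := atransP2 tr ta_in tb_in.
exists g => // i.
have Ei : b i = g (a i).
  by have := congr1 (fun t => tnth t i) e; rewrite /= /n_act !tnth_map !tnth_ord_tuple.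
by rewrite -Ei.
Qed.

Lemma avoid (T : finType) m (a : 'I_m -> T) : m < #|T| -> exists z, forall v, z != a v.
Proof.
move=> mT; case: (pickP [pred z | z \notin [set a v | v in 'I_m]]) => [z zn|h].
  by exists z => v; apply: contraNneq zn => ->; apply: imset_f.
suff : #|T| <= #|'I_m| by rewrite card_ord leqNgt mT.
apply: leq_trans (leq_imset_card a 'I_m).
by apply: subset_leq_card; apply/subsetP => z _; move: (h z) => /= /negbFE.
Qed.

Lemma kut_pred (T : finType) (G : {set {perm T}}) m :
  m < #|T| -> ordered_kut G [set: T] (1 + m) -> ordered_kut G [set: T] m.
Proof.
move=> mT hk a ainj aD P [Pn Pd PU].
have [v0 Pv0] : exists v0, 1 < #|P v0|.
  apply/existsP; apply: contraLR mT; rewrite negb_exists -leqNgt => /forallP h.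
  rewrite -cardsT -PU; apply: leq_trans (card_bigcup_le P) _.
  rewrite -[X in _ <= X]card_ord -sum1_card; apply: leq_sum => v _.
  by rewrite leqNgt h.
have [x xP] : exists x, x \in P v0 by apply/set0Pn; exact: Pn.
have [z hz] := avoid a mT.
pose P' v := if v == v0 then P v0 :\ x else P v.
have P'P v : P' v \subset P v.
  by rewrite /P'; case: eqP => [->|_]; [apply: subsetDl | apply: subxx].
have [|||||||||||g gG [_ hg]] := @glue_kut T G [set: T] 1 m (fun _ => z) (fun _ => [set x]) a P' hk.
- by move=> u u' _; rewrite !ord1.
- exact: ainj.
- by move=> u v; apply: hz.
- by move=> u; rewrite inE.
- by move=> u; rewrite inE.
- by move=> u; apply/set0Pn; exists x; rewrite set11.
- move=> v; rewrite /P'; case: (v =P v0) => [_|_]; last exact: Pn.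
  by rewrite -card_gt0 (cardsD1 x (P v0)) xP in Pv0 *.
- by move=> u u'; rewrite !ord1 eqxx.
- move=> v v' ne; apply: disjointW (P'P v) (P'P v') (Pd v v' ne).
- move=> u v; rewrite /= disjoints1 /P'; case: (v =P v0) => [_|/eqP ne]; first by rewrite !inE eqxx.
  apply/negP => xPv; move: (Pd v v0 ne) => /disjointFl/(_ xP).
  by rewrite xPv.
- apply/eqP; rewrite eqEsubset subsetT /=; apply/subsetP => y _.
  have : y \in \bigcup_(v < m) P v by rewrite PU inE.
  case/bigcupP => v _ yPv; rewrite inE; case: (eqVneq y x) => [->|yx].
    by rewrite big_ord1 set11.
  apply/orP; right; apply/bigcupP; exists v => //; rewrite /P'.
  by case: (v =P v0) => [e|//]; rewrite !inE yx -e.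
by exists g => // v; apply: (subsetP (P'P v)).
Qed.

Lemma kut_ntrans (T : finType) (G : {set {perm T}}) m :
  m < #|T| -> ordered_kut G [set: T] (1 + m) -> [transitive^m G, on [set: T] | 'P].
Proof.
move=> mT hk.
have key t1 t2 : t1 \in m.-dtuple([set: T]) -> t2 \in m.-dtuple([set: T]) ->
    exists2 g, g \in G & n_act 'P t1 g = t2.
  move=> /dtuple_onP[i1 _] /dtuple_onP[i2 _].
  have [z hz] := avoid (tnth t1) mT.
  have [w hw] := avoid (tnth t2) mT.
  pose Q0 := ~: [set tnth t2 v | v in 'I_m].
  have wQ : w \in Q0.
    by rewrite inE; apply/imsetP => -[v _ e]; move: (hw v); rewrite e eqxx.
  have [|||||||||||g gG [_ hg]] := @glue_kut T G [set: T] 1 m (fun _ => z)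
     (fun _ => Q0) (tnth t1) (fun v => [set tnth t2 v]) hk.
  - by move=> u u' _; rewrite !ord1.
  - exact: i1.
  - by move=> u v; apply: hz.
  - by move=> u; rewrite inE.
  - by move=> u; rewrite inE.
  - by move=> u; apply/set0Pn; exists w.
  - by move=> v; apply/set0Pn; exists (tnth t2 v); rewrite set11.
  - by move=> u u'; rewrite !ord1 eqxx.
  - by move=> v v' ne /=; rewrite disjoints1 in_set1 (inj_eq i2).
  - by move=> u v /=; rewrite disjoint_sym disjoints1 !inE negbK; apply: imset_f.
  - apply/setP => y; rewrite !inE big_ord1.
    case: (boolP (y \in [set tnth t2 v | v in 'I_m])) => [/imsetP[v _ ->]|yn].
      by apply/orP; right; apply/bigcupP; exists v => //; rewrite set11.
    by rewrite inE yn.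
  exists g => //; apply: eq_from_tnth => v; rewrite /n_act tnth_map.
  by apply/set1P; apply: hg.
have hmT : m <= #|T| by apply: ltnW.
pose t0 := [tuple (enum_val (widen_ord hmT i) : T) | i < m].
have t0in : t0 \in m.-dtuple([set: T]).
  apply/dtuple_onP; split=> [i j|i]; last by rewrite inE.
  rewrite /t0 !tnth_mktuple => /enum_val_inj e; apply: val_inj; exact: (congr1 val e).
apply/imsetP; exists t0 => //; apply/setP => t; rewrite /orbit; apply/idP/imsetP.
  move=> tin; have [g gG e] := key t0 t t0in tin.
  by exists g; rewrite // -e.
case=> g gG ->; apply: n_act_dtuple => //; apply/astabsP => x.
by rewrite !inE.
Qed.

Lemma kut_gen_ordered (T : finType) (G : {group {perm T}}) k :
  1 <= k -> kut G [set: T] k -> generously_transitive G [set: T] k.-1 ->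
  ordered_kut G [set: T] k.
Proof.
move=> k1 hk hgen a ainj aD P [Pn Pd PU].
pose A := [set a i | i in 'I_k].
have cA : #|A| = k by rewrite card_imset // card_ord.
pose PS := [set P i | i in 'I_k].
have Pinj : injective P.
  move=> i j e; case: (eqVneq i j) => // ne.
  have [x xP] := set0Pn _ (Pn i).
  have xPj : x \in P j by rewrite -e.
  by move: (Pd i j ne) => /disjointFl/(_ xPj); rewrite xP.
have partPS : partition PS [set: T].
  apply/and3P; split.
  - by apply/eqP; rewrite cover_imset -PU.
  - apply/trivIsetP => _ _ /imsetP[i _ ->] /imsetP[j _ ->] ne.
    by apply: Pd; apply: contraNneq ne => ->.
  - by apply/imsetP => -[i _ e]; move: (Pn i); rewrite -e eqxx.
have cPS : #|PS| = k by rewrite card_imset // card_ord.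
have [g gG hg] := hk A (subsetT A) cA PS partPS cPS.
pose M := [set g x | x in A].
have hM i : #|M :&: P i| = 1%N by apply: hg; apply: imset_f.
pose b i := odflt (a i) [pick x in M :&: P i].
have hb i : b i \in M :&: P i by apply: pick_in; rewrite -card_gt0 hM.
have binj : injective b.
  move=> i j e; case: (eqVneq i j) => // ne.
  have /setIP[_ bj] := hb j; have /setIP[_ bi] := hb i.
  by move: (Pd i j ne) => /disjointFl/(_ bj); rewrite -e bi.
pose c i := g (a i).
have cM i : c i \in M by apply: imset_f; apply: imset_f.
have cinj : injective c by move=> i j /perm_inj/ainj.
have Mc x : x \in M -> exists i, c i = x.
  by case/imsetP => y /imsetP[i _ ->] ->; exists i.
pose f x := if [pick i | c i == x] is Some i then b i else x.
have fc i : f (c i) = b i.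
  rewrite /f; case: pickP => [j /eqP/cinj -> //|h].
  by move: (h i); rewrite eqxx.
have fn x : x \notin M -> f x = x.
  move=> xM; rewrite /f; case: pickP => [j /eqP e|//].
  by move: (cM j); rewrite e (negbTE xM).
have finj : injective f.
  move=> x y.
  case: (boolP (x \in M)) => [/Mc[i <-]|xM]; case: (boolP (y \in M)) => [/Mc[j <-]|yM].
  - by rewrite !fc => /binj ->.
  - rewrite fc fn // => e; have /setIP[bM _] := hb i.
    by move: yM; rewrite -e bM.
  - rewrite fc fn // => e; have /setIP[bM _] := hb j.
    by move: xM; rewrite e bM.
  - by rewrite !fn.
pose s := perm finj.
have son : perm_on M s.
  apply/subsetP => x; rewrite inE permE; apply: contraR => xM.
  by rewrite fn ?eqxx.
have cM' : #|M| = k.-1.+1 by rewrite card_imset ?cA ?prednK //; apply: perm_inj.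
have [h hG [_ hh]] := hgen M (subsetT M) cM' s son.
exists (g * h); first by rewrite groupM.
move=> i; rewrite permM -/(c i) hh ?cM // permE fc.
by have /setIP[] := hb i.
Qed.

From mathcomp Require Import zify.

Lemma pp2 k : (1 < k)%N -> (k.-1.-1 + 2)%N = k.
Proof. by case: k => [|[|k]] // _; rewrite addn2. Qed.

Theorem proposition2p1 (T : finType) (G : {group {perm T}}) (k : nat)
    (hk1 : (1 <= k)%N) (hkn : (k <= #|T|)%N) :
  let Omega := [set: T] in
  ([transitive^k G, on Omega | 'P] -> ordered_kut G Omega k) /\
  ((2 <= k)%N -> ordered_kut G Omega k -> ordered_kut G Omega k.-1) /\
  ((2 <= k)%N -> kut G Omega k -> generously_transitive G Omega k.-1 ->
     ordered_kut G Omega k) /\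
  ((2 <= k)%N -> ordered_kut G Omega k -> [transitive^k.-1 G, on Omega | 'P]) /\
  ((2 <= k)%N -> ordered_kut G Omega k -> m_primitive G Omega k.-1) /\
  ((2 <= k)%N -> ordered_kut G Omega k ->
     forall alpha : T, ordered_kut 'C_G[alpha | 'P] (Omega :\ alpha) k.-1).
Proof.
move=> Omega; rewrite /Omega.
have kk : k = (1 + k.-1)%N by rewrite add1n prednK.
have kT : (k.-1 < #|T|)%N by rewrite prednK.
have dpart : (2 <= k)%N -> ordered_kut G [set: T] k -> [transitive^k.-1 G, on [set: T] | 'P].
  by move=> k2 hk; apply: kut_ntrans => //; rewrite -kk.
split; first exact: trans_kut.
split; first by move=> k2 hk; apply: kut_pred => //; rewrite -kk.
split; first by move=> k2; exact: kut_gen_ordered.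
split; first exact: dpart.
split.
  move=> k2 hk; split; first exact: dpart.
  move=> S _ cS.
  have hk2 : ordered_kut G [set: T] (#|S| + 2) by rewrite cS pp2.
  have := stab_kut hk2 (subsetT S) => h2.
  apply: kut2_prim h2.
  - move=> g x /setIP[gG /astabP gS]; rewrite !inE !andbT => xS.
    apply: contra xS => gxS; move: (gS _ gxS) => /= e.
    by rewrite -(perm_inj e).
  - have := cardsC S; rewrite setTD cS; lia.
move=> k2 hk alpha.
have hk2 : ordered_kut G [set: T] (#|[set alpha]| + k.-1) by rewrite cards1 -kk.
exact: stab_kut hk2 (subsetT _).
Qed.
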